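(* Suppose $\mathbf{v}_1(0),\dots,\mathbf{v}_m(0)$ are generated i.i.d. from $N(0,\alpha^2\mathbf{I})$, and that for each $k$, $\|\mathbf{v}_k(t)-\mathbf{v}_k(0)\|_2\le\tilde R_v:=\frac{\sqrt{2\pi}\,\alpha\mu_0}{8n(m/\delta)^{1/d}}$. Then with probability at least $1-\delta$, $\|\mathbf{G}(t)-\mathbf{G}(0)\|_2\le\frac{\mu_0}{4}$.
   Context: Data $\mathbf{x}_1,\dots,\mathbf{x}_n\in\mathbb{R}^d$ with $\|\mathbf{x}_i\|_2\le1$ and $\mathbf{x}_i\ne\beta\mathbf{x}_j$ for $i\ne j$, $\beta\ne0$. The vectors $\mathbf{v}_k(t)$ are the first-layer parameters at time/iteration $t$ of weight-normalized training (gradient flow or gradient descent) of $f(\mathbf{x})=\frac{1}{\sqrt m}\sum_kc_k\sigma(g_k\mathbf{v}_k^\top\mathbf{x}/\|\mathbf{v}_k\|_2)$ on the square loss, started from $\mathbf{v}_k(0)\sim N(0,\alpha^2\mathbf{I})$, $c_k$ uniform on $\{-1,1\}$, $g_k(0)=\|\mathbf{v}_k(0)\|_2/\alpha$; $\sigma(s)=\max\{s,0\}$. $\mathbf{G}_{ij}(t)=\frac1m\sum_k\sigma(\mathbf{v}_k(t)^\top\mathbf{x}_i)\sigma(\mathbf{v}_k(t)^\top\mathbf{x}_j)/\|\mathbf{v}_k(t)\|_2^2$. $\mu_0=\lambda_{\min}(\mathbf{G}^\infty)$ with $\mathbf{G}^\infty_{ij}=\mathbb{E}_{\mathbf{v}\sim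 N(0,\alpha^2\mathbf{I})}\langle\mathbf{x}_i^{\mathbf{v}},\mathbf{x}_j^{\mathbf{v}}\rangle\mathbb{1}\{\mathbf{v}^\top\mathbf{x}_i\ge0\}\mathbb{1}\{\mathbf{v}^\top\mathbf{x}_j\ge0\}$, $\mathbf{x}^{\mathbf{v}}=\mathbf{v}\mathbf{v}^\top\mathbf{x}/\|\mathbf{v}\|_2^2$. *)

(* Defs.v *)
From HB Require Import structures.
From mathcomp Require Import all_boot all_order all_algebra.
From mathcomp Require Import all_classical all_reals all_analysis.
Set Implicit Arguments. Unset Strict Implicit. Unset Printing Implicit Defensive.
Import Order.TTheory GRing.Theory Num.Theory.
Import numFieldNormedType.Exports.
Local Open Scope classical_set_scope.
Local Open Scope ring_scope.

Definition rnorm (R : realType) (k : nat) (u : 'rV[R]_k) : R :=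
  Num.sqrt (\sum_(i < k) u 0 i ^+ 2).

Definition dotv (R : realType) (k : nat) (u v : 'rV[R]_k) : R :=
  \sum_(i < k) u 0 i * v 0 i.

Definition relu (R : realType) (s : R) : R := Num.max s 0.

Definition spec_norm (R : realType) (n : nat) (A : 'M[R]_n) : R :=
  sup [set rnorm (u *m A) | u in [set u : 'rV[R]_n | rnorm u <= 1]].

(* Smallest eigenvalue (the matrices used are real symmetric, so all
   eigenvalues are real and there are finitely many). *)
Definition lambda_min (R : realType) (n : nat) (A : 'M[R]_n) : R :=
  inf [set a : R | eigenvalue A a].

Definition Gmat (R : realType) (n m d : nat) (X : 'I_n -> 'rV[R]_d)
    (v : 'I_m -> 'rV[R]_d) : 'M[R]_n :=
  \matrix_(i < n, j < n)
    (m%:R^-1 * \sum_(k < m)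
       relu (dotv (v k) (X i)) * relu (dotv (v k) (X j)) / (rnorm (v k)) ^+ 2).

Definition rvec (T : Type) (R : realType) (d : nat) (W : 'I_d -> T -> R)
    (w : T) : 'rV[R]_d := \row_(l < d) W l w.

(* G^infty_{ij} = E_v [ <x_i^v, x_j^v> 1{v^T x_i >= 0} 1{v^T x_j >= 0} ]
   with x^v = v v^T x / ||v||^2, so <x_i^v, x_j^v> = (v^T x_i)(v^T x_j)/||v||^2;
   the expectation is taken w.r.t. the law of the random vector W, which
   will be a N(0, alpha^2 I) vector. *)
Definition Ginf (dT : measure_display) (T : measurableType dT) (R : realType)
    (P : probability T R) (n d : nat) (W : 'I_d -> T -> R)
    (X : 'I_n -> 'rV[R]_d) : 'M[R]_n :=
  \matrix_(i < n, j < n)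
    fine ('E_P[fun w =>
      let v := rvec W w in
      dotv v (X i) * dotv v (X j) / (rnorm v) ^+ 2
        * (if 0 <= dotv v (X i) then 1 else 0)
        * (if 0 <= dotv v (X j) then 1 else 0)]).

Definition iid_gaussian (dT : measure_display) (T : measurableType dT)
    (R : realType) (P : probability T R) (m d : nat) (V : 'I_m -> 'I_d -> T -> R)
    (alpha : R) : Prop :=
  (forall k l, measurable_fun setT (V k l)) /\
  (forall k l (B : set R), measurable B ->
     P (V k l @^-1` B) = normal_prob 0 alpha B) /\
  (forall B : 'I_m -> 'I_d -> set R, (forall k l, measurable (B k l)) ->
     P [set w | forall k l, B k l (V k l w)] =
       (\prod_(k < m) \prod_(l < d) P (V k l @^-1` B k l))%E).

(* Main.v *)
Require Import Defs.
From HB Require Import structures.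
From mathcomp Require Import all_boot all_order all_algebra.
From mathcomp Require Import all_classical all_reals all_analysis.
From mathcomp Require Import ring lra measurable_realfun.
Import Order.TTheory GRing.Theory Num.Theory.
Import numFieldNormedType.Exports.
Local Open Scope classical_set_scope.
Local Open Scope ring_scope.

Section Dot.
Variables (R : realType) (k : nat).
Implicit Types u v w : 'rV[R]_k.

Lemma dotvC u v : dotv u v = dotv v u.
Proof. by apply: eq_bigr => i _; rewrite mulrC. Qed.

Lemma dotvDl u u' v : dotv (u + u') v = dotv u v + dotv u' v.
Proof. by rewrite /dotv -big_split; apply: eq_bigr => i _; rewrite mxE mulrDl. Qed.

Lemma dotvZl a u v : dotv (a *: u) v = a * dotv u v.
Proof. by rewrite /dotv mulr_sumr; apply: eq_bigr => i _; rewrite mxE mulrA. Qed.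

Lemma dotvNl u v : dotv (- u) v = - dotv u v.
Proof. by rewrite -scaleN1r dotvZl mulN1r. Qed.

Lemma dotvBl u u' v : dotv (u - u') v = dotv u v - dotv u' v.
Proof. by rewrite dotvDl dotvNl. Qed.

Lemma dotvDr u v v' : dotv u (v + v') = dotv u v + dotv u v'.
Proof. by rewrite dotvC dotvDl (dotvC v) (dotvC v'). Qed.

Lemma dotvZr a u v : dotv u (a *: v) = a * dotv u v.
Proof. by rewrite dotvC dotvZl dotvC. Qed.

Lemma dotvBr u v v' : dotv u (v - v') = dotv u v - dotv u v'.
Proof. by rewrite dotvC dotvBl (dotvC v) (dotvC v'). Qed.

Lemma dotv0l v : dotv 0 v = 0.
Proof. by rewrite -(scale0r 0) dotvZl mul0r. Qed.

Lemma dotvv_ge0 u : 0 <= dotv u u.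
Proof. by apply: sumr_ge0 => i _; rewrite -expr2 sqr_ge0. Qed.

Lemma rnorm_ge0 u : 0 <= rnorm u.
Proof. exact: sqrtr_ge0. Qed.

Lemma rnormE u : rnorm u = Num.sqrt (dotv u u).
Proof. by rewrite /rnorm /dotv; congr Num.sqrt; apply: eq_bigr => i _; rewrite expr2. Qed.

Lemma rnorm_sqr u : rnorm u ^+ 2 = dotv u u.
Proof. by rewrite rnormE sqr_sqrtr // dotvv_ge0. Qed.

Lemma dotvv_eq0 u : dotv u u = 0 -> forall v, dotv u v = 0.
Proof.
move=> /eqP; rewrite psumr_eq0; last by move=> i _; rewrite -expr2 sqr_ge0.
move=> /allP H v; apply: big1 => i _.
have := H i (mem_index_enum i); rewrite /= mulf_eq0 orbb => /eqP ->.
by rewrite mul0r.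
Qed.

Lemma CS u v : dotv u v ^+ 2 <= dotv u u * dotv v v.
Proof.
have [C0|Cn0] := eqVneq (dotv v v) 0.
  by rewrite C0 mulr0 dotvC dotvv_eq0 // expr0n.
have Cp : 0 < dotv v v by rewrite lt_def Cn0 dotvv_ge0.
have := dotvv_ge0 (dotv v v *: u - dotv u v *: v).
rewrite !(dotvBl, dotvBr, dotvZl, dotvZr) (dotvC v u).
move=> H.
have : 0 <= dotv v v * (dotv u u * dotv v v - dotv u v ^+ 2) by nra.
by rewrite pmulr_rge0 // subr_ge0.
Qed.

End Dot.
Arguments dotvC {R k}.
Arguments dotvDl {R k}.
Arguments dotvZl {R k}.
Arguments dotvNl {R k}.
Arguments dotvBl {R k}.
Arguments dotvDr {R k}.
Arguments dotvZr {R k}.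
Arguments dotvBr {R k}.
Arguments dotv0l {R k}.
Arguments dotvv_ge0 {R k}.
Arguments rnorm_ge0 {R k}.
Arguments rnormE {R k}.
Arguments rnorm_sqr {R k}.
Arguments dotvv_eq0 {R k}.
Arguments CS {R k}.
Section Scal.
Variable R : realType.
Implicit Types c rho P X Q Y s : R.

Lemma relu_id {s : R} : 0 <= s -> relu s = s.
Proof. by move=> h; rewrite /relu max_l. Qed.
Lemma relu_0 {s : R} : s <= 0 -> relu s = 0.
Proof. by move=> h; rewrite /relu max_r. Qed.
Lemma relu_ge0 s : 0 <= relu s.
Proof. by rewrite /relu le_max lexx orbT. Qed.

Lemma abs_le_sq (a b : R) : 0 <= b -> a ^+ 2 <= b ^+ 2 -> `|a| <= b.
Proof. by move=> hb h; rewrite ler_norml; apply/andP; split; nra. Qed.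

Lemma main_case c rho P X Q Y :
  0 <= c -> 0 <= rho -> c ^+ 2 + rho ^+ 2 = 1 ->
  rho ^+ 2 * P ^+ 2 + X ^+ 2 <= rho ^+ 2 ->
  rho ^+ 2 * Q ^+ 2 + Y ^+ 2 <= rho ^+ 2 ->
  `|(c * P + X) * (c * Q + Y) - P * Q| <= rho.
Proof.
move=> hc hr hcr hX hY.
have [r0|rp] := eqVneq rho 0.
  have X0 : X = 0 by move: hX; rewrite r0; nra.
  have Y0 : Y = 0 by move: hY; rewrite r0; nra.
  have c1 : c = 1 by move: hcr; rewrite r0; nra.
  by rewrite X0 Y0 c1 r0 !addr0 !mul1r subrr normr0.
have rp' : 0 < rho by rewrite lt_def rp hr.
set x := X / rho; set y := Y / rho.
have eX : X = rho * x by rewrite /x mulrC divfK.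
have eY : Y = rho * y by rewrite /y mulrC divfK.
rewrite eX eY in hX hY *.
have h1 : P ^+ 2 + x ^+ 2 <= 1.
  have : rho ^+ 2 * (P ^+ 2 + x ^+ 2) <= rho ^+ 2 * 1 by rewrite mulr1; lra.
  by rewrite ler_pM2l // exprn_gt0.
have h2 : Q ^+ 2 + y ^+ 2 <= 1.
  have : rho ^+ 2 * (Q ^+ 2 + y ^+ 2) <= rho ^+ 2 * 1 by rewrite mulr1; lra.
  by rewrite ler_pM2l // exprn_gt0.
set A := x * y - P * Q; set C := P * y + x * Q.
have eD : (c * P + rho * x) * (c * Q + rho * y) - P * Q = rho * (rho * A + c * C).
  have e : (c * P + rho * x) * (c * Q + rho * y) - P * Q = rho * (rho * A + c * C) + (c ^+ 2 + rho ^+ 2 - 1) * P * Q.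
    by rewrite /A /C; ring.
  by rewrite e hcr subrr !mul0r addr0.
have h3 : (rho * A + c * C) ^+ 2 <= A ^+ 2 + C ^+ 2.
  have e : (rho * A + c * C) ^+ 2 + (rho * C - c * A) ^+ 2 = (c ^+ 2 + rho ^+ 2) * (A ^+ 2 + C ^+ 2) by ring.
  rewrite hcr mul1r in e; have := sqr_ge0 (rho * C - c * A); lra.
have h4 : A ^+ 2 + C ^+ 2 = (P ^+ 2 + x ^+ 2) * (Q ^+ 2 + y ^+ 2) by rewrite /A /C; ring.
have h5 : (P ^+ 2 + x ^+ 2) * (Q ^+ 2 + y ^+ 2) <= 1.
  have := sqr_ge0 P; have := sqr_ge0 x; have := sqr_ge0 Q; have := sqr_ge0 y; nra.
rewrite eD; apply: abs_le_sq => //.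
rewrite exprMn; have := sqr_ge0 rho; nra.
Qed.

Lemma scal c rho P X Q Y :
  0 <= c -> 0 <= rho -> c ^+ 2 + rho ^+ 2 = 1 ->
  rho ^+ 2 * P ^+ 2 + X ^+ 2 <= rho ^+ 2 ->
  rho ^+ 2 * Q ^+ 2 + Y ^+ 2 <= rho ^+ 2 ->
  P ^+ 2 <= 1 -> Q ^+ 2 <= 1 -> (c * P + X) ^+ 2 <= 1 -> (c * Q + Y) ^+ 2 <= 1 ->
  `|relu (c * P + X) * relu (c * Q + Y) - relu P * relu Q| <= rho.
Proof.
move=> hc hr hcr hX hY hP hQ hP' hQ'.
have hXr : X ^+ 2 <= rho ^+ 2 by have := sqr_ge0 P; have := sqr_ge0 rho; nra.
have hYr : Y ^+ 2 <= rho ^+ 2 by have := sqr_ge0 Q; have := sqr_ge0 rho; nra.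
have kP : c * P + X <= 0 -> 0 <= P -> P <= rho.
  move=> h1 h2; apply: (@le_trans _ _ `|P|); first exact: ler_norm.
  apply: abs_le_sq => //.
  have : (c * P) ^+ 2 <= X ^+ 2 by have := mulr_ge0 hc h2; nra.
  rewrite exprMn => h; nra.
have kQ : c * Q + Y <= 0 -> 0 <= Q -> Q <= rho.
  move=> h1 h2; apply: (@le_trans _ _ `|Q|); first exact: ler_norm.
  apply: abs_le_sq => //.
  have : (c * Q) ^+ 2 <= Y ^+ 2 by have := mulr_ge0 hc h2; nra.
  rewrite exprMn => h; nra.
have lP : P <= 0 -> c * P + X <= rho.
  move=> h; have : X <= rho by apply: le_trans (ler_norm X) _; apply: abs_le_sq.
  have : 0 <= c * (- P) by apply: mulr_ge0 => //; rewrite oppr_ge0.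
  nra.
have lQ : Q <= 0 -> c * Q + Y <= rho.
  move=> h; have : Y <= rho by apply: le_trans (ler_norm Y) _; apply: abs_le_sq.
  have : 0 <= c * (- Q) by apply: mulr_ge0 => //; rewrite oppr_ge0.
  nra.
have aP : c * P + X <= 1 by apply: le_trans (ler_norm _) _; apply: abs_le_sq => //; rewrite expr1n.
have aQ : c * Q + Y <= 1 by apply: le_trans (ler_norm _) _; apply: abs_le_sq => //; rewrite expr1n.
have bP : P <= 1 by apply: le_trans (ler_norm _) _; apply: abs_le_sq => //; rewrite expr1n.
have bQ : Q <= 1 by apply: le_trans (ler_norm _) _; apply: abs_le_sq => //; rewrite expr1n.
case: (leP (c * P + X) 0) => n1; case: (leP (c * Q + Y) 0) => n2;
case: (leP P 0) => o1; case: (leP Q 0) => o2;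
(try rewrite (relu_0 n1)); (try rewrite (relu_0 n2)); (try rewrite (relu_0 o1)); (try rewrite (relu_0 o2));
(try rewrite (relu_id (ltW n1))); (try rewrite (relu_id (ltW n2))); (try rewrite (relu_id (ltW o1))); (try rewrite (relu_id (ltW o2)));
rewrite ?mul0r ?mulr0 ?subrr ?normr0 ?sub0r ?subr0 ?normrN //.
all: try (rewrite ger0_norm; last by apply: mulr_ge0; apply: ltW).
all: first [exact: main_case | (have := kP n1 (ltW o1); nra) | (have := kQ n2 (ltW o2); nra)
  | (have := lP o1; nra) | (have := lQ o2; nra)].
Qed.
End Scal.
Arguments relu_id {R}.
Arguments relu_0 {R}.
Arguments relu_ge0 {R}.
Arguments abs_le_sq {R}.
Arguments main_case {R}.
Arguments scal {R}.

Section Entry.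
Variables (R : realType) (k : nat).
Implicit Types u v w a b : 'rV[R]_k.

Definition F a b v : R := relu (dotv v a) * relu (dotv v b) / rnorm v ^+ 2.

Lemma relu_le_abs (x : R) : relu x <= `|x|.
Proof. by rewrite /relu ge_max ler_norm normr_ge0. Qed.

Lemma reluZ (s x : R) : 0 <= s -> relu (s * x) = s * relu x.
Proof.
move=> hs; case: (leP x 0) => hx.
  by rewrite relu_0 ?relu_0 ?mulr0 // mulr_ge0_le0.
by rewrite !relu_id ?mulr_ge0 // ltW.
Qed.

Lemma dotaa a : rnorm a <= 1 -> dotv a a <= 1.
Proof. by move=> h; rewrite -rnorm_sqr; have := rnorm_ge0 a; nra. Qed.

Lemma CS1 u a : rnorm a <= 1 -> dotv u a ^+ 2 <= dotv u u.
Proof.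
move=> ha; apply: le_trans (CS u a) _.
have := dotaa _ ha; have := dotvv_ge0 u; nra.
Qed.

Lemma F_ge0 a b v : 0 <= F a b v.
Proof. by rewrite /F mulr_ge0 ?invr_ge0 ?sqr_ge0 // mulr_ge0 // relu_ge0. Qed.

Lemma F_le1 a b v : rnorm a <= 1 -> rnorm b <= 1 -> F a b v <= 1.
Proof.
move=> ha hb; rewrite /F.
have [s0|sp] := eqVneq (rnorm v) 0.
  by rewrite s0 expr0n /= invr0 mulr0.
have sp' : 0 < rnorm v ^+ 2 by rewrite exprn_gt0 // lt_def sp rnorm_ge0.
rewrite ler_pdivrMr // mul1r rnorm_sqr.
have h1 := CS1 v _ ha; have h2 := CS1 v _ hb.
have r1 := relu_le_abs (dotv v a); have r2 := relu_le_abs (dotv v b).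
have g1 := relu_ge0 (dotv v a); have g2 := relu_ge0 (dotv v b).
have e1 : `|dotv v a| ^+ 2 = dotv v a ^+ 2 by rewrite real_normK // num_real.
have e2 : `|dotv v b| ^+ 2 = dotv v b ^+ 2 by rewrite real_normK // num_real.
have n1 := normr_ge0 (dotv v a); have n2 := normr_ge0 (dotv v b).
have := dotvv_ge0 v.
have q : (relu (dotv v a) * relu (dotv v b)) ^+ 2 <= dotv v v ^+ 2.
  rewrite exprMn expr2 [X in _ <= X]expr2; apply: ler_pM; try nra.
move=> hv; apply: le_trans (ler_norm _) _; exact: abs_le_sq.
Qed.

Lemma dotv_sub_sq u v : rnorm (u - v) ^+ 2 = rnorm u ^+ 2 - 2 * dotv u v + rnorm v ^+ 2.
Proof.
rewrite !rnorm_sqr !(dotvBl, dotvBr) (dotvC v u); ring.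
Qed.

End Entry.
Arguments F {R k}.
Arguments relu_le_abs {R}.
Arguments reluZ {R}.
Arguments dotaa {R k}.
Arguments CS1 {R k}.
Arguments F_ge0 {R k}.
Arguments F_le1 {R k}.
Arguments dotv_sub_sq {R k}.

Section Key.
Variables (R : realType) (k : nat).
Implicit Types u v w a b : 'rV[R]_k.

Lemma key a b v v0 : rnorm a <= 1 -> rnorm b <= 1 -> 0 < rnorm v0 ->
  `|F a b v - F a b v0| <= rnorm (v - v0) / rnorm v0.
Proof.
move=> ha hb hs0.
set s := rnorm v; set s0 := rnorm v0; set kk := dotv v v0.
have eD := dotv_sub_sq v v0; rewrite -/s -/s0 -/kk in eD.
set D := rnorm (v - v0) in eD *.
have Dge0 : 0 <= D := rnorm_ge0 _.
have sge0 : 0 <= s := rnorm_ge0 _.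
have bnd01 : `|F a b v - F a b v0| <= 1.
  have := F_ge0 a b v; have := F_ge0 a b v0; have := F_le1 a b v ha hb; have := F_le1 a b v0 ha hb.
  move=> *; rewrite ler_norml; apply/andP; split; lra.
have big1 : s0 <= D -> `|F a b v - F a b v0| <= D / s0.
  by move=> h; apply: le_trans bnd01 _; rewrite ler_pdivlMr // mul1r.
have hCS : kk ^+ 2 <= s ^+ 2 * s0 ^+ 2 by rewrite /s /s0 !rnorm_sqr; exact: CS.
have [sz|snz] := eqVneq s 0.
  apply: big1; rewrite sz expr0n /= in hCS.
  have kk0 : kk = 0 by move: hCS; rewrite mul0r; nra.
  move: eD; rewrite sz kk0 expr0n /= mulr0 !subr0 add0r => eD.
  by have := rnorm_ge0 v0; rewrite -/s0; nra.
have sp : 0 < s by rewrite lt_def snz.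
case: (leP kk 0) => hk.
  by apply: big1; have := rnorm_ge0 v0; rewrite -/s0; nra.
set u0 := s0^-1 *: v0; set u := s^-1 *: v.
set c := kk / (s * s0).
have ss0 : 0 < s * s0 by rewrite mulr_gt0.
have ec : c * (s * s0) = kk by rewrite /c divfK // gt_eqF.
have cp : 0 < c by rewrite /c divr_gt0.
have c2 : c ^+ 2 <= 1.
  have : c ^+ 2 * (s * s0) ^+ 2 <= 1 * (s * s0) ^+ 2 by rewrite -exprMn ec mul1r exprMn.
  by rewrite ler_pM2r // exprn_gt0.
have uu0 : dotv u0 u0 = 1.
  by rewrite /u0 dotvZl dotvZr -rnorm_sqr -/s0 mulrA -expr2 -exprMn mulVf ?gt_eqF // expr1n.
have uu : dotv u u = 1.
  by rewrite /u dotvZl dotvZr -rnorm_sqr -/s mulrA -expr2 -exprMn mulVf ?gt_eqF // expr1n.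
have uuc : dotv u u0 = c.
  by rewrite /u /u0 dotvZl dotvZr -/kk /c invfM; ring.
have ev : v = s *: u by rewrite /u scalerA mulfV ?gt_eqF // scale1r.
have ev0 : v0 = s0 *: u0 by rewrite /u0 scalerA mulfV ?gt_eqF // scale1r.
clearbody u u0.
set w := u - c *: u0.
have eu : u = w + c *: u0 by rewrite /w subrK.
have wu0 : dotv w u0 = 0 by rewrite /w dotvBl dotvZl uu0 uuc mulr1 subrr.
have u0w : dotv u0 w = 0 by rewrite dotvC.
have ww : dotv w w = 1 - c ^+ 2.
  rewrite /w !(dotvBl, dotvBr, dotvZl, dotvZr) uu uu0 uuc (dotvC u0 u) uuc; ring.
clearbody w.
set rho := Num.sqrt (1 - c ^+ 2).
have rho2 : rho ^+ 2 = 1 - c ^+ 2 by rewrite sqr_sqrtr // subr_ge0.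
have rhoge0 : 0 <= rho := sqrtr_ge0 _.
have Fu : F a b v = relu (c * dotv u0 a + dotv w a) * relu (c * dotv u0 b + dotv w b).
  rewrite /F -/s {1 2}ev !dotvZl !reluZ // eu !dotvDl !dotvZl.
  rewrite (addrC (dotv w a)) (addrC (dotv w b)); by field; rewrite gt_eqF.
have Fu0 : F a b v0 = relu (dotv u0 a) * relu (dotv u0 b).
  rewrite /F -/s0 {1 2}ev0 !dotvZl !reluZ ?ltW //.
  by field; rewrite gt_eqF.
have bessel : forall a', rnorm a' <= 1 -> rho ^+ 2 * dotv u0 a' ^+ 2 + dotv w a' ^+ 2 <= rho ^+ 2.
  move=> a' ha'.
  have [r0|rn0] := eqVneq (rho ^+ 2) 0.
    have w0 : dotv w w = 0 by rewrite ww -rho2.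
    by rewrite r0 mul0r (dotvv_eq0 w w0) expr0n /= addr0.
  have rp : 0 < rho ^+ 2 by rewrite lt_def rn0 sqr_ge0.
  have := dotvv_ge0 ((rho ^+ 2) *: a' - (rho ^+ 2 * dotv u0 a') *: u0 - dotv w a' *: w).
  rewrite !(dotvBl, dotvBr, dotvZl, dotvZr) uu0 u0w wu0 ww -rho2 (dotvC a' u0) (dotvC a' w).
  have := dotaa _ ha'; set A := dotv a' a'; set P := dotv u0 a'; set X := dotv w a'.
  move=> hA h.
  have : 0 <= rho ^+ 2 * (rho ^+ 2 * A - rho ^+ 2 * P ^+ 2 - X ^+ 2).
    by move: h; congr (0 <= _); ring.
  rewrite pmulr_rge0 // => h2; nra.
have hP : forall a', rnorm a' <= 1 -> dotv u0 a' ^+ 2 <= 1.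
  by move=> a' ha'; rewrite -uu0; exact: CS1.
have hPu : forall a', rnorm a' <= 1 -> (c * dotv u0 a' + dotv w a') ^+ 2 <= 1.
  move=> a' ha'; rewrite -uu; have := CS1 u _ ha'.
  by rewrite eu dotvDl dotvZl addrC.
have Hd : `|F a b v - F a b v0| <= rho.
  rewrite Fu Fu0; apply: scal => //.
  - exact: ltW.
  - by rewrite rho2 addrC subrK.
  - exact: bessel.
  - exact: bessel.
  - exact: hP.
  - exact: hP.
  - exact: hPu.
  - exact: hPu.
apply: le_trans Hd _.
set t := D / s0.
have eDt : D = t * s0 by rewrite /t divfK // gt_eqF.
have tge0 : 0 <= t by rewrite /t divr_ge0 // ltW.
have key2 : s0 ^+ 2 * rho ^+ 2 <= D ^+ 2.
  rewrite eD rho2.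
  have e : s0 ^+ 2 * (1 - c ^+ 2) = s0 ^+ 2 - (kk / s) ^+ 2.
    by rewrite -ec; field; rewrite gt_eqF.
  rewrite e; have := sqr_ge0 (s - kk / s).
  have e2 : (s - kk / s) ^+ 2 = s ^+ 2 - 2 * kk + (kk / s) ^+ 2.
    by field; rewrite gt_eqF.
  rewrite e2; lra.
rewrite eDt exprMn in key2.
have : rho ^+ 2 <= t ^+ 2.
  by rewrite -(ler_pM2l (exprn_gt0 2 hs0)) (mulrC (s0 ^+ 2) (t ^+ 2)).
nra.
Qed.

End Key.
Arguments key {R k}.

Lemma spec_bound (R : realType) n (M : 'M[R]_n) eps : 0 <= eps ->
  (forall i j, `|M i j| <= eps) -> spec_norm M <= n%:R * eps.
Proof.
move=> he hM; rewrite /spec_norm; apply: ge_sup.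
  exists (rnorm (0 *m M)); exists 0 => //=.
  by rewrite /rnorm big1 ?sqrtr0 // => i _; rewrite mxE expr0n.
move=> _ [u hu <-].
have hu1 : dotv u u <= 1 by apply: dotaa.
have hne : 0 <= n%:R * eps by rewrite mulr_ge0.
rewrite /rnorm -(ger0_norm hne) -sqrtr_sqr; apply: ler_wsqrtr.
have hc : forall j, ((u *m M) 0 j) ^+ 2 <= n%:R * eps ^+ 2.
  move=> j.
  have -> : (u *m M) 0 j = dotv u (\row_i M i j).
    by rewrite mxE; apply: eq_bigr => i _; rewrite mxE.
  apply: le_trans (CS _ _) _.
  have hcc : dotv (\row_i M i j) (\row_i M i j) <= n%:R * eps ^+ 2.
    rewrite /dotv; apply: le_trans (_ : \sum_(i < n) eps ^+ 2 <= _).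
      apply: ler_sum => i _; rewrite !mxE.
      by have := hM i j; rewrite ler_norml => /andP[h1 h2]; nra.
    by rewrite sumr_const card_ord mulr_natl.
  have := dotvv_ge0 u; have := dotvv_ge0 (\row_i M i j); nra.
apply: le_trans (_ : \sum_(j < n) n%:R * eps ^+ 2 <= _).
  by apply: ler_sum => j _; exact: hc.
rewrite sumr_const card_ord -mulr_natl; rewrite le_eqVlt; apply/orP; left; apply/eqP; ring.
Qed.

Lemma entry_bound (R : realType) n m d (X : 'I_n -> 'rV[R]_d) (v v0 : 'I_m -> 'rV[R]_d) eps :
  (0 < m)%N -> (forall i, rnorm (X i) <= 1) -> (forall k, 0 < rnorm (v0 k)) ->
  (forall k, rnorm (v k - v0 k) / rnorm (v0 k) <= eps) ->
  forall i j, `|(Gmat X v - Gmat X v0) i j| <= eps.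
Proof.
move=> hm hX hv0 hv i j.
rewrite !mxE -mulrBr -sumrB normrM ger0_norm ?invr_ge0 ?ler0n //.
rewrite ler_pdivrMl ?ltr0n //.
apply: le_trans (ler_norm_sum _ _ _) _.
apply: le_trans (_ : \sum_(k < m) eps <= _); last by rewrite sumr_const card_ord mulr_natl.
apply: ler_sum => k _.
exact: le_trans (key (X i) (X j) (v k) (v0 k) (hX i) (hX j) (hv0 k)) (hv k).
Qed.

Lemma normal_itv_bound (R : realType) (alpha r : R) : 0 < alpha -> 0 <= r ->
  (normal_prob 0 alpha `[(-r)%R, r] <= (normal_peak alpha * (r *+ 2))%:E)%E.
Proof.
move=> ha hr; rewrite /normal_prob.
apply: (@le_trans _ _ (\int[lebesgue_measure]_(x in `[(-r)%R, r]) (normal_peak alpha)%:E)%E).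
  apply: ge0_le_integral => //=.
  all: try by move=> x _; rewrite lee_fin normal_pdf_ge0.
  all: try by move=> x _; rewrite lee_fin normal_pdf_ub // gt_eqF.
  apply/measurable_EFinP; apply: measurable_funTS; exact: measurable_normal_pdf.
have := integral_cst lebesgue_measure (measurable_itv `[(-r)%R, r]) (normal_peak alpha)%:E.
rewrite /cst => ->; have := lebesgue_measure_itv `[(-r)%R, r]; rewrite /= => ->.
rewrite lte_fin; case: ifP => h.
  by rewrite opprK -EFinD -EFinM lee_fin -mulr2n.
by rewrite mule0 lee_fin mulr_ge0 ?normal_peak_ge0 // mulrn_wge0.
Qed.

Lemma fin_subadd (R : realType) (dT : measure_display) (T : measurableType dT)
  (P : probability T R) m (C : 'I_m -> set T) : (forall k, measurable (C k)) ->
  (P (\big[setU/set0]_(k < m) C k) <= \sum_(k < m) P (C k))%E.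
Proof.
move=> hC.
have : forall s : seq 'I_m, (P (\big[setU/set0]_(k <- s) C k) <= \sum_(k <- s) P (C k))%E.
  elim => [|a s IH]; first by rewrite !big_nil measure0.
  rewrite !big_cons; apply: le_trans (measureU2 _ _ _) _ => //.
    by apply: bigsetU_measurable => i _; exact: hC.
  exact: leeD2l.
exact.
Qed.

Lemma in_bigsetI (T : Type) (I : eqType) (s : seq I) (F : I -> set T) w :
  (\big[setI/setT]_(l <- s) F l) w <-> (forall l, l \in s -> F l w).
Proof.
elim: s => [|a s IH]; first by rewrite big_nil; split.
rewrite big_cons; split.
  move=> [h1 /IH h2] l; rewrite inE => /orP[/eqP -> //|]; exact: h2.
move=> h; split; first by apply: h; rewrite inE eqxx.
by apply/IH => l hl; apply: h; rewrite inE hl orbT.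
Qed.

Lemma in_bigsetU (T : Type) (I : eqType) (s : seq I) (F : I -> set T) w l :
  l \in s -> F l w -> (\big[setU/set0]_(k <- s) F k) w.
Proof.
elim: s => [|a s IH] //; rewrite big_cons inE => /orP[/eqP <- h|hl h]; first by left.
by right; apply: IH.
Qed.

Lemma lambda_min0 (R : realType) (A : 'M[R]_0) : lambda_min A = 0.
Proof.
rewrite /lambda_min (_ : [set a | eigenvalue A a] = set0) ?inf0 //.
apply/seteqP; split => a //=.
by rewrite /eigenvalue (flatmx0 (eigenspace A a)) eqxx.
Qed.

Theorem lemmaB5 (R : realType) (n m d : nat) (X : 'I_n -> 'rV[R]_d)
    (alpha delta : R) (dT : measure_display) (T : measurableType dT)
    (P : probability T R) (V : 'I_m -> 'I_d -> T -> R)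
    (Hm : (0 < m)%N) (Hd : (0 < d)%N) :
  0 < alpha -> 0 < delta < 1 ->
  (forall i, rnorm (X i) <= 1) ->
  (forall i j, i != j -> forall beta : R, beta != 0 -> X i != beta *: X j) ->
  iid_gaussian P V alpha ->
  let mu0 := lambda_min (Ginf P (V (Ordinal Hm)) X) in
  let Rv := Num.sqrt (2 * pi) * alpha * mu0
              / (8 * n%:R * powR (m%:R / delta) (d%:R^-1)) in
  let v0 := fun w (k : 'I_m) => rvec (V k) w in
  exists A : set T, measurable A /\
    A `<=` [set w | forall v : 'I_m -> 'rV[R]_d,
                      (forall k, rnorm (v k - v0 w k) <= Rv) ->
                      spec_norm (Gmat X v - Gmat X (v0 w)) <= mu0 / 4] /\
    ((1 - delta)%:E <= P A)%E.
Proof.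
move=> ha /andP[d0 d1] hX hsep [hmeas [hlaw hind]] mu0 Rv v0.
have mpos : (0 < m%:R :> R) by rewrite ltr0n.
have mdp : 0 < m%:R / delta by rewrite divr_gt0.
set K := powR (m%:R / delta) (d%:R^-1).
have Kp : 0 < K by apply: powR_gt0.
have sp : 0 < Num.sqrt (2 * pi) :> R by rewrite sqrtr_gt0 mulr_gt0 // pi_gt0.
set r := Num.sqrt (2 * pi) * alpha / (2 * K).
have rp : 0 < r by rewrite /r divr_gt0 ?mulr_gt0.
set I : set R := [set` `[- r, r]%R].
have mI : measurable I := measurable_itv _.
pose C (k : 'I_m) := \big[setI/setT]_(l < d) (V k l @^-1` I).
have mpre : forall k l (B : set R), measurable B -> measurable (V k l @^-1` B).
  by move=> k l B mB; have := hmeas k l measurableT B mB; rewrite setTI.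
have mC : forall k, measurable (C k).
  by move=> k; apply: bigsetI_measurable => l _; exact: mpre.
pose U := \big[setU/set0]_(k < m) C k.
have mU : measurable U by apply: bigsetU_measurable => k _; exact: mC.
exists (~` U); split; first exact: measurableC.
split.
  move=> w hw v hv.
  have hC : forall k, ~ C k w.
    by move=> k hk; apply: hw; exact: (in_bigsetU _ _ _ _ _ _ (mem_index_enum k) hk).
  have hv0 : forall k, r < rnorm (v0 w k).
    move=> k.
    have : ~ (forall l, I (V k l w)).
      by move=> h; apply: (hC k); apply/in_bigsetI => l _; exact: h.
    move=> /existsNP [l hl].
    have hl' : r ^+ 2 < V k l w ^+ 2.
      move: hl; rewrite /I /= in_itv /= => /negP; rewrite negb_and -!ltNge => /orP[h|h]; nra.
    have hs : V k l w ^+ 2 <= \sum_(i < d) v0 w k 0 i ^+ 2.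
      rewrite (bigD1 l) //= {1}/v0 /rvec mxE lerDl.
      by apply: sumr_ge0 => i _; exact: sqr_ge0.
    have rr : 0 < r ^+ 2 by rewrite exprn_gt0.
    rewrite /rnorm -(ger0_norm (ltW rp)) -sqrtr_sqr ltr_sqrt; last by lra.
    lra.
  have Rv0 : 0 <= Rv := le_trans (rnorm_ge0 _) (hv (Ordinal Hm)).
  have hratio : forall k, rnorm (v k - v0 w k) / rnorm (v0 w k) <= Rv / r.
    move=> k; have hk := hv0 k; have h0 : 0 < rnorm (v0 w k) by apply: lt_trans hk.
    rewrite ler_pdivrMr //.
    apply: le_trans (hv k) _.
    have rn0 : r != 0 by rewrite gt_eqF.
    rewrite -{1}(divfK rn0 Rv).
    exact: (ler_wpM2l (divr_ge0 Rv0 (ltW rp)) (ltW hk)).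
  have hpos : forall k, 0 < rnorm (v0 w k) by move=> k; apply: lt_trans (hv0 k).
  have hb := spec_bound _ _ (Gmat X v - Gmat X (v0 w)) _ (divr_ge0 Rv0 (ltW rp))
     (entry_bound _ _ _ _ X v (v0 w) _ Hm hX hpos hratio).
  apply: le_trans hb _.
  have [n0|npos] := eqVneq n 0%N.
    rewrite n0 mul0r; subst n; rewrite /mu0 lambda_min0; lra.
  have nR : n%:R != 0 :> R by rewrite pnatr_eq0.
  rewrite le_eqVlt; apply/orP; left; apply/eqP.
  rewrite /Rv /r -/K; field.
  by rewrite nR gt_eqF // gt_eqF // gt_eqF.
have hpeak : normal_peak alpha * (r *+ 2) = K^-1.
  rewrite /normal_peak.
  have -> : alpha ^+ 2 * pi *+ 2 = alpha ^+ 2 * (2 * pi) by rewrite -mulr_natr; ring.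
  rewrite sqrtrM ?sqr_ge0 // sqrtr_sqr ger0_norm ?ltW // /r.
  by field; rewrite !gt_eqF.
have hnorm : (normal_prob 0 alpha I <= (K^-1)%:E)%E.
  by rewrite -hpeak; apply: normal_itv_bound => //; exact: ltW.
have hnorm0 : (0 <= normal_prob 0 alpha I)%E.
  by rewrite -(hlaw (Ordinal Hm) (Ordinal Hd)) //; exact: measure_ge0.
have hKd : K ^+ d = m%:R / delta.
  rewrite /K -powR_mulrn ?powR_ge0 // -powRrM mulVf ?powRr1 ?ltW //.
  by rewrite pnatr_eq0 -lt0n.
have hCk : forall k, (P (C k) <= (delta / m%:R)%:E)%E.
  move=> k.
  pose B (k' : 'I_m) (l : 'I_d) := if k' == k then I else setT.
  have eC : C k = [set w | forall k' l, B k' l (V k' l w)].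
    apply/seteqP; split => w /=.
      move=> /in_bigsetI h k' l; rewrite /B; case: eqP => [->|] //.
      exact: h (mem_index_enum l).
    move=> h; apply/in_bigsetI => l _; have := h k l; by rewrite /B eqxx.
  rewrite eC hind; last by move=> k' l; rewrite /B; case: ifP.
  rewrite (bigD1 k) //= [X in (_ * X)%E]big1 ?mule1; last first.
    move=> k' hk'; apply: big1 => l _.
    by rewrite /B (negbTE hk') preimage_setT probability_setT.
  rewrite /B eqxx.
  under eq_bigr => l _ do rewrite hlaw //.
  move: hnorm hnorm0; case: (normal_prob 0 alpha I) => [x| |] //= hx1 hx0.
  rewrite prodEFin lee_fin prodr_const card_ord -invf_div -hKd -exprVn.
  apply: lerXn2r; rewrite ?nnegrE.
  - by rewrite -lee_fin.
  - by rewrite invr_ge0 ltW.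
  - by rewrite -lee_fin.
have hU : (P U <= delta%:E)%E.
  apply: le_trans (fin_subadd _ _ _ P _ _ mC) _.
  apply: le_trans (_ : (\sum_(k < m) (delta / m%:R)%:E <= _)%E).
    by apply: lee_sum => k _; exact: hCk.
  rewrite sumEFin lee_fin sumr_const card_ord.
  have -> : (delta / m%:R) *+ m = delta / m%:R * m%:R by rewrite mulr_natr.
  by rewrite divfK // gt_eqF.
rewrite probability_setC //.
have hU0 : (0 <= P U)%E := measure_ge0 P U.
have fU : P U \is a fin_num by rewrite ge0_fin_numE // (le_lt_trans hU) // ltry.
rewrite -(fineK fU) in hU hU0 *.
rewrite -EFinB lee_fin; rewrite lee_fin in hU; rewrite lee_fin in hU0; lra.
Qed.
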